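(* $\mathbf S(\mathbf{pAND}\cup\mathbf{11tAND}\cup\mathbf{11pOR}\cup\mathbf{tOR})=\mathbf S(\mathbf{pAND}\cup\mathbf{11pOR}\cup\mathbf{tOR})$.
   Context: Petri nets: $(P,T,F)$ with finite disjoint places $P$, transitions $T$, flow edges $F\subseteq(P\times T)\cup(T\times P)$; $\bullet x=\{y\mid(y,x)\in F\}$, $x\bullet=\{y\mid(x,y)\in F\}$. Workflow nets. A pWF net is $(P,T,F,I,O)$ with $(P,T,F)$ a Petri net, $I,O\subseteq P$ non-empty, every node reachable by a directed path from some node of $I$, and some node of $O$ reachable from every node. A tWF net is the same with $I,O$ non-empty subsets of $T$. Input nodes may have incoming edges and output nodes outgoing edges. A WF net is a pWF or tWF net; it is one-input (one-output) if $|I|=1$ ($|O|=1$). Substitution. Let $N=(P,T,F,I,O)$ and $M=(P',T',F',I',O')$ be WF nets with disjoint node sets. If $p\in P$ and $M$ is a pWF net, $N\otimes_p M$ is obtained from $N$ by deleting $p$ and all edges incident to $p$, adding all nodes and edges of $M$, adding an edge $(t,p')$ for each $t\in\bullet_N p$ and each $p'\in I'$, and an edge $(p',t)$ for each $p'\in O'$ and each $t\in p\bullet_N$; its input set is $(I\setminus\{p\})\cup I'$ if $p\in I$ and $I$ otherwise, and its output set is $(O\setminus\{p\})\cup O'$ if $p\in O$ and $O$ otherwise. If $t\in T$ and $M$ is a tWF net, $N\otimes_t M$ is defined analogously: delete $t$ and its edges, add $M$, add $(q,t')$ for each $q\in\bullet_N t$, $t'\in I'$, and $(t',q)$ for each $t'\in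 O'$, $q\in t\bullet_N$, with input/output sets updated in the same way. The substitution closure $\mathbf S(C)$ of a class $C$ of WF nets is the smallest superclass of $C$ such that whenever $N,M\in\mathbf S(C)$ are disjoint, $N\otimes_p M\in\mathbf S(C)$ for every place $p$ of $N$ if $M$ is a pWF net, and $N\otimes_t M\in\mathbf S(C)$ for every transition $t$ of $N$ if $M$ is a tWF net. AND and OR nets. An AND net is an acyclic WF net $(P,T,F,I,O)$ such that for every place $p$: (1) either $p\in I$ and $|\bullet p|=0$, or $p\notin I$ and $|\bullet p|=1$; and (2) either $p\in O$ and $|p\bullet|=0$, or $p\notin O$ and $|p\bullet|=1$. An OR net is a (possibly cyclic) WF net such that for every transition $t$: (1) either $t\in I$ and $|\bullet t|=0$, or $t\notin I$ and $|\bullet t|=1$; and (2) either $t\in O$ and $|t\bullet|=0$, or $t\notin O$ and $|t\bullet|=1$. A pAND (tAND, pOR, tOR) net is an AND (AND, OR, OR) net that is a pWF (tWF, pWF, tWF) net. $\mathbf{pAND}$ is the class of pAND nets, $\mathbf{11tAND}$ the class of one-input one-output tAND nets, $\mathbf{11pOR}$ the class of one-input one-output pOR nets, and $\mathbf{tOR}$ the class of tOR nets. *)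

(* Defs.v *)
(* Nodes are natural numbers (an infinite name supply, so that
   disjoint copies always exist); sets of nodes are predicates nat -> Prop. *)
From Stdlib Require Import List Relations.
Import ListNotations.

Record net := Net {
  Pl : nat -> Prop;
  Tr : nat -> Prop;
  Fl : nat -> nat -> Prop;
  In_ : nat -> Prop;
  Out : nat -> Prop
}.

Definition node (N : net) (x : nat) : Prop := Pl N x \/ Tr N x.

Definition petri_net (N : net) : Prop :=
  (exists l : list nat, forall x, node N x -> In x l) /\
  (forall x, ~ (Pl N x /\ Tr N x)) /\
  (forall x y, Fl N x y -> (Pl N x /\ Tr N y) \/ (Tr N x /\ Pl N y)).

Definition nonempty (A : nat -> Prop) : Prop := exists x, A x.
Definition subset (A B : nat -> Prop) : Prop := forall x, A x -> B x.

Definition reach (N : net) : nat -> nat -> Prop := clos_refl_trans nat (Fl N).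

Definition wf_with (K : net -> nat -> Prop) (N : net) : Prop :=
  petri_net N /\
  nonempty (In_ N) /\ subset (In_ N) (K N) /\
  nonempty (Out N) /\ subset (Out N) (K N) /\
  (forall x, node N x -> exists i, In_ N i /\ reach N i x) /\
  (forall x, node N x -> exists o, Out N o /\ reach N x o).

Definition pWF (N : net) : Prop := wf_with Pl N.
Definition tWF (N : net) : Prop := wf_with Tr N.
Definition WF (N : net) : Prop := pWF N \/ tWF N.

Definition one_input (N : net) : Prop := exists i, forall x, In_ N x <-> x = i.
Definition one_output (N : net) : Prop := exists o, forall x, Out N x <-> x = o.

Definition acyclic (N : net) : Prop := forall x, ~ clos_trans nat (Fl N) x x.

Definition card0 (R : nat -> Prop) : Prop := forall y, ~ R y.
Definition card1 (R : nat -> Prop) : Prop := exists y, R y /\ forall z, R z -> z = y.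

Definition pre (N : net) (x : nat) : nat -> Prop := fun y => Fl N y x.
Definition post (N : net) (x : nat) : nat -> Prop := fun y => Fl N x y.

Definition AND_net (N : net) : Prop :=
  WF N /\ acyclic N /\
  (forall p, Pl N p ->
     ((In_ N p /\ card0 (pre N p)) \/ (~ In_ N p /\ card1 (pre N p))) /\
     ((Out N p /\ card0 (post N p)) \/ (~ Out N p /\ card1 (post N p)))).

Definition OR_net (N : net) : Prop :=
  WF N /\
  (forall t, Tr N t ->
     ((In_ N t /\ card0 (pre N t)) \/ (~ In_ N t /\ card1 (pre N t))) /\
     ((Out N t /\ card0 (post N t)) \/ (~ Out N t /\ card1 (post N t)))).

Definition pAND (N : net) : Prop := AND_net N /\ pWF N.
Definition tAND (N : net) : Prop := AND_net N /\ tWF N.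
Definition pOR  (N : net) : Prop := OR_net N /\ pWF N.
Definition tOR  (N : net) : Prop := OR_net N /\ tWF N.
Definition c11tAND (N : net) : Prop := tAND N /\ one_input N /\ one_output N.
Definition c11pOR  (N : net) : Prop := pOR N /\ one_input N /\ one_output N.

Definition disjoint (N M : net) : Prop := forall x, ~ (node N x /\ node M x).

(* N ⊗_n M : replace node n of N by M (same formula for places and transitions). *)
Definition subst (N : net) (n : nat) (M : net) : net := {|
  Pl  := fun x => (Pl N x /\ x <> n) \/ Pl M x;
  Tr  := fun x => (Tr N x /\ x <> n) \/ Tr M x;
  Fl  := fun x y => (Fl N x y /\ x <> n /\ y <> n) \/ Fl M x y \/
                    (Fl N x n /\ In_ M y) \/ (Out M x /\ Fl N n y);
  In_ := fun x => (In_ N x /\ x <> n) \/ (In_ N n /\ In_ M x);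
  Out := fun x => (Out N x /\ x <> n) \/ (Out N n /\ Out M x)
|}.

Definition union (C D : net -> Prop) : net -> Prop := fun N => C N \/ D N.

Inductive Sclos (C : net -> Prop) : net -> Prop :=
| S_base : forall N, C N -> Sclos C N
| S_place : forall N M p, Sclos C N -> Sclos C M -> disjoint N M ->
    Pl N p -> pWF M -> Sclos C (subst N p M)
| S_trans : forall N M t, Sclos C N -> Sclos C M -> disjoint N M ->
    Tr N t -> tWF M -> Sclos C (subst N t M).

(* Main.v *)
From Stdlib Require Import List Relations Lia Arith FunctionalExtensionality PropExtensionality.
Require Import Defs.
Import ListNotations.

Lemma Sclos_mono (C D : net -> Prop) :
  (forall N, C N -> Sclos D N) -> forall N, Sclos C N -> Sclos D N.
Proof. intros H N HN; induction HN.
 - auto.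
 - apply S_place; auto.
 - apply S_trans; auto.
Qed.

Lemma rt_first {A} (R : relation A) a b : clos_refl_trans A R a b ->
  a = b \/ exists c, R a c /\ clos_refl_trans A R c b.
Proof. intro H. apply clos_rt_rt1n in H. destruct H as [|y z H1 H2];
  [left; auto | right; exists y; split; auto; apply clos_rt1n_rt; auto]. Qed.

Lemma rt_last {A} (R : relation A) a b : clos_refl_trans A R a b ->
  a = b \/ exists c, clos_refl_trans A R a c /\ R c b.
Proof. intro H. apply clos_rt_rtn1 in H. destruct H as [|y z H1 H2];
  [left; auto | right; exists y; split; auto; apply clos_rtn1_rt; auto]. Qed.

Lemma rt_restrict {A} (R S : relation A) a b : clos_refl_trans A R a b ->
  (forall u v, R u v -> clos_refl_trans A R a u -> clos_refl_trans A R v b -> S u v) ->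
  clos_refl_trans A S a b.
Proof.
  intros H. apply clos_rt_rt1n in H. induction H as [|x y z H1 H2 IH]; intros HS.
  - apply rt_refl.
  - apply rt_trans with y.
    + apply rt_step. apply HS; [auto| apply rt_refl | apply clos_rt1n_rt; auto].
    + apply IH. intros u v Ruv Hyu Hvz. apply HS; auto.
      apply rt_trans with y; [apply rt_step; auto | auto].
Qed.

Lemma t_of_step_rt {A} (R : relation A) a b c : R a b -> clos_refl_trans A R b c ->
  clos_trans A R a c.
Proof. intros H1 H2. apply clos_rt_rt1n in H2. revert a H1.
  induction H2 as [|x y z H3 H4 IH]; intros a H1.
  - apply t_step; auto.
  - apply t_trans with x; [apply t_step; auto | apply IH; auto]. Qed.

Lemma t_of_rt_step {A} (R : relation A) a b c : clos_refl_trans A R a b -> R b c ->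
  clos_trans A R a c.
Proof. intros H1 H2. eapply clos_rt_t; [exact H1| apply t_step; exact H2]. Qed.

Lemma fresh (l : list nat) : exists q, ~ In q l.
Proof.
  assert (exists n, forall x, In x l -> x < n) as [n Hn].
  { induction l as [|a l [n Hn]]. exists 0; simpl; tauto.
    exists (S (max a n)). intros x [->|Hx]; [lia| specialize (Hn x Hx); lia]. }
  exists n. intro H. specialize (Hn n H). lia.
Qed.

Lemma net_eq (N1 N2 : net) :
  (forall x, Pl N1 x <-> Pl N2 x) -> (forall x, Tr N1 x <-> Tr N2 x) ->
  (forall x y, Fl N1 x y <-> Fl N2 x y) -> (forall x, In_ N1 x <-> In_ N2 x) ->
  (forall x, Out N1 x <-> Out N2 x) -> N1 = N2.
Proof.
  destruct N1, N2; simpl; intros H1 H2 H3 H4 H5. f_equal;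
  repeat (apply functional_extensionality; intro); apply propositional_extensionality; auto.
Qed.

Definition restrictM (N : net) (i o : nat) : net :=
  Net (Pl N) (fun x => Tr N x /\ x <> i /\ x <> o)
      (fun x y => Fl N x y /\ x <> i /\ y <> i /\ x <> o /\ y <> o)
      (fun p => Pl N p /\ Fl N i p) (fun p => Pl N p /\ Fl N p o).

Definition T0 (i q o : nat) : net :=
  Net (fun x => x = q) (fun x => x = i \/ x = o)
      (fun x y => (x = i /\ y = q) \/ (x = q /\ y = o))
      (fun x => x = i) (fun x => x = o).

Lemma T0_tOR i q o : q <> i -> q <> o -> i <> o -> tOR (T0 i q o).
Proof.
  intros Hqi Hqo Hio.
  assert (W : tWF (T0 i q o)).
  { unfold tWF, wf_with, petri_net, nonempty, subset, node, reach; simpl.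
    split; [split; [|split]|].
    - exists [q; i; o]. simpl. intros x [H|[H|H]]; subst; tauto.
    - intros x [H1 [H2|H2]]; subst; congruence.
    - intros x y [[H1 H2]|[H1 H2]]; subst; [right|left]; tauto.
    - split; [exists i; auto|]. split; [intros; tauto|].
      split; [exists o; auto|]. split; [intros; tauto|].
      split; intros x Hx.
      + exists i; split; auto. destruct Hx as [->|[->| ->]].
        * apply rt_step; left; auto.
        * apply rt_refl.
        * apply rt_trans with q; apply rt_step; [left|right]; auto.
      + exists o; split; auto. destruct Hx as [->|[->| ->]].
        * apply rt_step; right; auto.
        * apply rt_trans with q; apply rt_step; [left|right]; auto.
        * apply rt_refl. }
  split; [|exact W]. split; [right; exact W|].
  unfold card0, card1, pre, post; simpl. intros t [->| ->].
  - split.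
    + left. split; auto. intros y [[_ H]|[_ H]]; congruence.
    + right. split; [congruence|]. exists q. split; [left; auto|].
      intros z [[_ H]|[H _]]; congruence.
  - split.
    + right. split; [congruence|]. exists q. split; [right; auto|].
      intros z [[_ H]|[H _]]; congruence.
    + left. split; auto. intros y [[H _]|[H _]]; congruence.
Qed.

Lemma key (N : net) : c11tAND N -> Sclos (union pAND (union c11pOR tOR)) N.
Proof.
  intros HN. pose proof HN as [[HAND HtWF] [[i Hi] [o Ho]]].
  pose proof HtWF as [[[l Hl] [Hdisj Hedge]] [_ [HIT [_ [HOT [RIn ROut]]]]]].
  destruct HAND as [_ [Hacyc Hplace]].
  assert (Ti : Tr N i) by (apply HIT, Hi; auto).
  assert (To : Tr N o) by (apply HOT, Ho; auto).
  assert (RI : forall x, node N x -> reach N i x).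
  { intros x Hx. destruct (RIn x Hx) as [i' [Hi' R]]. apply Hi in Hi'. subst; auto. }
  assert (RO : forall x, node N x -> reach N x o).
  { intros x Hx. destruct (ROut x Hx) as [o' [Ho' R]]. apply Ho in Ho'. subst; auto. }
  assert (Enode : forall x y, Fl N x y -> node N x /\ node N y).
  { intros x y H. unfold node. destruct (Hedge x y H); tauto. }
  assert (noin : forall y, ~ Fl N y i).
  { intros y H. apply (Hacyc i). apply t_of_rt_step with y; auto.
    apply RI. apply (Enode _ _ H). }
  assert (noout : forall y, ~ Fl N o y).
  { intros y H. apply (Hacyc o). apply t_of_step_rt with y; auto.
    apply RO. apply (Enode _ _ H). }
  assert (toi : forall u, reach N u i -> u = i).
  { intros u H. destruct (rt_last _ _ _ H) as [|[c [_ Hc]]]; auto. exfalso; eapply noin; eauto. }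
  assert (fromo : forall v, reach N o v -> v = o).
  { intros v H. destruct (rt_first _ _ _ H) as [|[c [Hc _]]]; auto. exfalso; eapply noout; eauto. }
  assert (PT : forall x, Pl N x -> Tr N x -> False) by (intros x H1 H2; apply (Hdisj x); auto).
  destruct (Nat.eq_dec i o) as [Eio|Nio].
  -
    subst o.
    assert (noE : forall u v, ~ Fl N u v).
    { intros u v H. apply (Hacyc i). eapply clos_rt_t.
      - apply (RI u). apply (Enode _ _ H).
      - apply t_of_step_rt with v; auto. apply RO. apply (Enode _ _ H). }
    apply S_base. right. right. split; [|exact HtWF]. split; [right; exact HtWF|].
    intros t Ht. assert (node N t) as Hnt by (right; auto).
    assert (t = i).
    { destruct (rt_first _ _ _ (RI t Hnt)) as [|[c [Hc _]]]; [congruence|]. exfalso; eapply noE; eauto. }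
    subst t. split; left; (split; [apply Hi || apply Ho; auto|]); intros y Hy; eapply noE; eauto.
  - destruct (fresh l) as [q Hq].
    assert (Hqn : forall x, node N x -> x <> q) by (intros x Hx ->; apply Hq, Hl; auto).
    assert (Hqi : q <> i) by (intro; apply (Hqn i); [right|]; auto).
    assert (Hqo : q <> o) by (intro; apply (Hqn o); [right|]; auto).
    set (M := restrictM N i o).
    assert (petM : petri_net M).
    { split; [|split].
      - exists l. intros x Hx. apply Hl. unfold node in *; simpl in *; tauto.
      - intros x [H1 [H2 _]]. eauto.
      - intros x y [H [? [? [? ?]]]]. simpl. destruct (Hedge x y H); tauto. }
    assert (pWFM : pWF M).
    { split; [exact petM|]. unfold nonempty, subset; simpl.
      split; [|split; [tauto|split; [|split; [tauto|split]]]].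
      - destruct (rt_first _ _ _ (RO i (or_intror Ti))) as [|[c [Hc _]]]; [congruence|].
        exists c. split; auto. destruct (Hedge _ _ Hc) as [[]|[]]; [exfalso; eauto|auto].
      - destruct (rt_last _ _ _ (RI o (or_intror To))) as [|[c [_ Hc]]]; [congruence|].
        exists c. split; auto. destruct (Hedge _ _ Hc) as [[]|[]]; [auto|exfalso; eauto].
      - intros x Hx.
        assert (node N x /\ x <> i /\ x <> o) as [HxN [Hxi Hxo]].
        { unfold node in *; simpl in Hx. destruct Hx as [Hx|[Hx [? ?]]]; auto.
          split; [auto|split; intros ->; eauto]. }
        destruct (rt_first _ _ _ (RI x HxN)) as [|[c [Hc Hcx]]]; [congruence|].
        assert (Pc : Pl N c) by (destruct (Hedge _ _ Hc) as [[]|[]]; [exfalso; eauto|auto]).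
        exists c. split; [auto|].
        apply rt_restrict with (1 := Hcx). intros u v Huv Hcu Hvx. simpl.
        split; [auto|]. repeat split.
        + intros ->. apply toi in Hcu. subst; eauto.
        + intros ->. eapply noin; eauto.
        + intros ->. eapply noout; eauto.
        + intros ->. apply fromo in Hvx. congruence.
      - intros x Hx.
        assert (node N x /\ x <> i /\ x <> o) as [HxN [Hxi Hxo]].
        { unfold node in *; simpl in Hx. destruct Hx as [Hx|[Hx [? ?]]]; auto.
          split; [auto|split; intros ->; eauto]. }
        destruct (rt_last _ _ _ (RO x HxN)) as [|[c [Hxc Hc]]]; [congruence|].
        assert (Pc : Pl N c) by (destruct (Hedge _ _ Hc) as [[]|[]]; [auto|exfalso; eauto]).
        exists c. split; [auto|].
        apply rt_restrict with (1 := Hxc). intros u v Huv Hxu Hvc. simpl.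
        split; [auto|]. repeat split.
        + intros ->. apply toi in Hxu. congruence.
        + intros ->. eapply noin; eauto.
        + intros ->. eapply noout; eauto.
        + intros ->. apply fromo in Hvc. subst; eauto. }
    assert (pANDM : pAND M).
    { split; [|exact pWFM]. split; [left; exact pWFM|]. split.
      - intros x H. apply (Hacyc x). revert H. generalize x at 1 3 as a. generalize x as b.
        clear. intros b a H.
        induction H as [x y H|x y z _ IH1 _ IH2].
        + apply t_step; exact (proj1 H).
        + eapply t_trans; eauto.
      - intros p Hp. simpl in Hp. destruct (Hplace p Hp) as [Hpre Hpost].
        assert (p <> i) by (intros ->; eauto).
        assert (p <> o) by (intros ->; eauto).
        unfold card0, card1, pre, post; simpl. split.
        + destruct Hpre as [[HI _]|[_ [y [Hy Hu]]]]; [apply Hi in HI; congruence|].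
          destruct (Nat.eq_dec y i) as [->|Hyi].
          * left. split; [auto|]. intros z [Hz [Hzi _]]. apply Hu in Hz. congruence.
          * right. split.
            -- intros [_ Hf]. apply Hu in Hf. congruence.
            -- exists y. split.
               ++ repeat split; auto. intros ->. eapply noout; eauto.
               ++ intros z [Hz _]. apply Hu; auto.
        + destruct Hpost as [[HO _]|[_ [y [Hy Hu]]]]; [apply Ho in HO; congruence|].
          destruct (Nat.eq_dec y o) as [->|Hyo].
          * left. split; [auto|]. intros z [Hz [_ [_ [_ Hzo]]]]. apply Hu in Hz. congruence.
          * right. split.
            -- intros [_ Hf]. apply Hu in Hf. congruence.
            -- exists y. split.
               ++ repeat split; auto. intros ->. eapply noin; eauto.
               ++ intros z [Hz _]. apply Hu; auto. }
    assert (E : subst (T0 i q o) q M = N).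
    { apply net_eq; simpl.
      - intro x. split; [intros [[? ?]|?]; [congruence|auto]|auto].
      - intro x. split.
        + intros [[[->| ->] _]|[? _]]; auto.
        + intros Hx. destruct (Nat.eq_dec x i) as [->|Hxi]; [left; split; auto|].
          destruct (Nat.eq_dec x o) as [->|Hxo]; [left; split; auto|].
          right; auto.
      - intros x y. split.
        + intros [[[[? ?]|[? ?]] [? ?]]|[[? _]|[[[[? _]|[? ?]] [_ ?]]|[[_ ?] [[? _]|[_ ?]]]]]];
            subst; try congruence; auto.
        + intros Hxy. destruct (Nat.eq_dec x i) as [->|Hxi].
          { right; right; left. split; [left; auto|]. split; auto.
            destruct (Hedge _ _ Hxy) as [[]|[]]; [exfalso; eauto|auto]. }
          destruct (Nat.eq_dec y o) as [->|Hyo].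
          { right; right; right. split; [|right; auto]. split; auto.
            destruct (Hedge _ _ Hxy) as [[]|[]]; [auto|exfalso; eauto]. }
          right; left. repeat split; auto.
          * intros ->. eapply noin; eauto.
          * intros ->. eapply noout; eauto.
      - intro x. rewrite Hi. split; [intros [[? ?]|[? _]]; congruence|intros ->; left; auto].
      - intro x. rewrite Ho. split; [intros [[? ?]|[? _]]; congruence|intros ->; left; auto]. }
    rewrite <- E. apply S_place.
    + apply S_base. right. right. apply T0_tOR; auto.
    + apply S_base. left. exact pANDM.
    + intros x [Hx1 Hx2]. unfold node in *; simpl in *.
      destruct Hx1 as [->|[->| ->]].
      * apply (Hqn q); auto. unfold node; tauto.
      * destruct Hx2 as [?|[? [? ?]]]; eauto.
      * destruct Hx2 as [?|[? [? ?]]]; eauto.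
    + simpl; auto.
    + exact pWFM.
Qed.

Theorem mainTheorem2 :
  forall N : net,
    Sclos (union pAND (union c11tAND (union c11pOR tOR))) N <->
    Sclos (union pAND (union c11pOR tOR)) N.
Proof.
  intro N. split; apply Sclos_mono; clear N; intros N HN.
  - destruct HN as [H|[H|H]].
    + apply S_base; left; auto.
    + apply key; auto.
    + apply S_base; right; auto.
  - apply S_base. destruct HN as [H|H]; [left; auto|right; right; auto].
Qed.
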